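(* For every $n$-dimensional (compact) polyhedron $P$ there is a natural number $m$ such that the cone over $P$ can be embedded in the product of $n+1$ copies of an $m$-od.
   Context: A polyhedron is the underlying space of a finite regular CW complex (equivalently, a finite simplicial complex). An $m$-od is the cone over an $m$-element set. *)

(* Defs.v *)
(* concrete Euclidean models, points of R^N are nat -> R
   vanishing at coordinates >= N. *)
From Stdlib Require Import Reals List.
Import ListNotations.
Open Scope R_scope.

Fixpoint rsum (k : nat) (f : nat -> R) : R :=
  match k with O => 0 | S k' => rsum k' f + f k' end.

Definition pt := nat -> R.
Definition zero_pt : pt := fun _ => 0.

Definition in_RN (N : nat) (x : pt) : Prop := forall i, (N <= i)%nat -> x i = 0.

(* l^1 distance on R^N (equivalent to the Euclidean metric) *)
Definition dist (N : nat) (x y : pt) : R := rsum N (fun i => Rabs (x i - y i)).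

Definition conv (s : list pt) (x : pt) : Prop :=
  exists w : nat -> R,
    (forall i, (i < length s)%nat -> 0 <= w i) /\
    rsum (length s) w = 1 /\
    forall j, x j = rsum (length s) (fun i => w i * nth i s zero_pt j).

Definition aff_indep (s : list pt) : Prop :=
  forall c : nat -> R,
    rsum (length s) c = 0 ->
    (forall j, rsum (length s) (fun i => c i * nth i s zero_pt j) = 0) ->
    forall i, (i < length s)%nat -> c i = 0.

(* A finite geometric simplicial complex in R^N: a list of simplices, each
   given by its (affinely independent) vertex list; closed under faces; any
   two simplices meet in their common face (possibly empty). *)
Definition is_complex (N : nat) (K : list (list pt)) : Prop :=
  (forall s, In s K -> s <> [] /\ aff_indep s /\ (forall v, In v s -> in_RN N v)) /\
  (forall s f, In s K -> f <> [] -> incl f s ->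
     exists t, In t K /\ forall v, In v t <-> In v f) /\
  (forall s t, In s K -> In t K ->
     exists u, (forall v, In v u <-> In v s /\ In v t) /\
               forall x, (conv s x /\ conv t x) <-> conv u x).

Definition complex_dim (K : list (list pt)) (n : nat) : Prop :=
  (exists s, In s K /\ length s = S n) /\
  (forall s, In s K -> (length s <= S n)%nat).

Definition polyhedron (K : list (list pt)) (x : pt) : Prop :=
  exists s, In s K /\ conv s x.

(* geometric cone over P ⊆ R^N inside R^(N+1): apex e_N, base P x {0} *)
Definition cone (N : nat) (P : pt -> Prop) (y : pt) : Prop :=
  exists x t, P x /\ 0 <= t <= 1 /\ y N = t /\
    (forall i, (i < N)%nat -> y i = (1 - t) * x i) /\
    (forall i, (N < i)%nat -> y i = 0).

(* the k-th block (coordinates k*m .. k*m+m-1) of y lies in the m-od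
   { t e_j : j < m, t in [0,1] } ⊆ R^m (cone over m points, apex 0) *)
Definition od_block (m k : nat) (y : pt) : Prop :=
  (forall i, (i < m)%nat -> y (k * m + i)%nat = 0) \/
  exists j t, (j < m)%nat /\ 0 <= t <= 1 /\
    forall i, (i < m)%nat -> y (k * m + i)%nat = if Nat.eqb i j then t else 0.

Definition od_prod (m n : nat) (y : pt) : Prop :=
  in_RN (m * (n + 1)) y /\ forall k, (k <= n)%nat -> od_block m k y.

Definition embeds (NA : nat) (A : pt -> Prop) (NB : nat) (B : pt -> Prop) : Prop :=
  exists f : pt -> pt,
    (forall x, A x -> B (f x)) /\
    (forall x y, A x -> A y -> (forall i, f x i = f y i) -> forall i, x i = y i) /\
    (forall x, A x -> forall eps, 0 < eps -> exists d, 0 < d /\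
       forall y, A y -> dist NA x y < d -> dist NB (f x) (f y) < eps) /\
    (forall x, A x -> forall eps, 0 < eps -> exists d, 0 < d /\
       forall y, A y -> dist NB (f x) (f y) < d -> dist NA x y < eps).

(* Main.v *)
Require Import Defs.
From Stdlib Require Import Reals Lra Lia List Arith Classical ClassicalEpsilon FunctionalExtensionality.
Import ListNotations.
Import Defs.
Open Scope R_scope.


Lemma rsum_ext : forall k f g, (forall i, (i < k)%nat -> f i = g i) -> rsum k f = rsum k g.
Proof. induction k; intros; simpl; auto. rewrite (IHk f g). rewrite H; auto. intros; apply H; lia. Qed.

Lemma rsum_plus : forall k f g, rsum k (fun i => f i + g i) = rsum k f + rsum k g.
Proof. induction k; intros; simpl; [lra|]. rewrite IHk; lra. Qed.

Lemma rsum_minus : forall k f g, rsum k (fun i => f i - g i) = rsum k f - rsum k g.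
Proof. induction k; intros; simpl; [lra|]. rewrite IHk; lra. Qed.

Lemma rsum_scal : forall k c f, rsum k (fun i => c * f i) = c * rsum k f.
Proof. induction k; intros; simpl; [lra|]. rewrite IHk; lra. Qed.

Lemma rsum_scalr : forall k c f, rsum k (fun i => f i * c) = rsum k f * c.
Proof. induction k; intros; simpl; [lra|]. rewrite IHk; lra. Qed.

Lemma rsum_0 : forall k, rsum k (fun _ => 0) = 0.
Proof. induction k; simpl; auto. rewrite IHk; lra. Qed.

Lemma rsum_zero : forall k f, (forall i, (i < k)%nat -> f i = 0) -> rsum k f = 0.
Proof. intros. rewrite (rsum_ext k f (fun _ => 0)); auto. apply rsum_0. Qed.

Lemma rsum_le : forall k f g, (forall i, (i < k)%nat -> f i <= g i) -> rsum k f <= rsum k g.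
Proof. induction k; intros; simpl; [lra|]. assert (f k <= g k) by (apply H; lia).
 assert (rsum k f <= rsum k g) by (apply IHk; intros; apply H; lia). lra. Qed.

Lemma rsum_nonneg : forall k f, (forall i, (i < k)%nat -> 0 <= f i) -> 0 <= rsum k f.
Proof. intros. rewrite <- (rsum_0 k). apply rsum_le; auto. Qed.

Lemma rsum_abs : forall k f, Rabs (rsum k f) <= rsum k (fun i => Rabs (f i)).
Proof. induction k; intros; simpl. rewrite Rabs_R0; lra.
 eapply Rle_trans. apply Rabs_triang. specialize (IHk f); lra. Qed.

Lemma rsum_term_le : forall k f i, (forall j, (j < k)%nat -> 0 <= f j) -> (i < k)%nat -> f i <= rsum k f.
Proof. induction k; intros; [lia|]. simpl. destruct (Nat.eq_dec i k).
 - subst. assert (0 <= rsum k f) by (apply rsum_nonneg; intros; apply H; lia). lra.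
 - assert (f i <= rsum k f) by (apply IHk; [intros; apply H; lia| lia]). assert (0 <= f k) by (apply H; lia). lra. Qed.

Lemma rsum_swap : forall a b (F : nat -> nat -> R),
  rsum a (fun i => rsum b (fun j => F i j)) = rsum b (fun j => rsum a (fun i => F i j)).
Proof. induction a; intros; simpl. rewrite rsum_0; auto.
 rewrite IHa. rewrite <- rsum_plus. auto. Qed.

Lemma rsum_add_range : forall a b f, rsum (a + b) f = rsum a f + rsum b (fun j => f (a + j)%nat).
Proof. intros a b; revert a; induction b; intros; simpl. rewrite Nat.add_0_r; lra.
 rewrite Nat.add_succ_r. simpl. rewrite IHb. lra. Qed.

Lemma rsum_shift : forall k f, rsum (S k) f = f O + rsum k (fun i => f (S i)).
Proof. intros. replace (S k) with (1 + k)%nat by lia. rewrite rsum_add_range. simpl. lra. Qed.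

Lemma rsum_mul : forall m q f, rsum (m * q) f = rsum q (fun k => rsum m (fun j => f (k * m + j)%nat)).
Proof. intros m q; induction q; intros; simpl. rewrite Nat.mul_0_r; auto.
 replace (m * S q)%nat with (m * q + m)%nat by lia. rewrite rsum_add_range. rewrite IHq.
 f_equal. apply rsum_ext; intros. f_equal. lia. Qed.

Lemma rsum_single : forall k f i0, (i0 < k)%nat -> (forall i, (i < k)%nat -> i <> i0 -> f i = 0) -> rsum k f = f i0.
Proof. induction k; intros; [lia|]. simpl. destruct (Nat.eq_dec i0 k).
 - subst. rewrite rsum_zero; [lra|]. intros; apply H0; lia.
 - rewrite (IHk f i0); [| lia | intros; apply H0; lia]. rewrite (H0 k); [lra|lia|auto]. Qed.

Lemma Rabs_eq_0 : forall a, Rabs a = 0 -> a = 0.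
Proof. intros. destruct (Req_dec a 0); auto. exfalso; apply (Rabs_no_R0 a); auto. Qed.


Definition ip (D : nat) (u v : pt) : R := rsum D (fun l => u l * v l).

Definition indep (D q : nat) (w : nat -> pt) : Prop :=
  forall c : nat -> R, (forall l, (l < D)%nat -> rsum q (fun r => c r * w r l) = 0) ->
  forall r, (r < q)%nat -> c r = 0.

Lemma rsum_nonneg_zero : forall k f, (forall i, (i < k)%nat -> 0 <= f i) -> rsum k f = 0 ->
  forall i, (i < k)%nat -> f i = 0.
Proof. intros. assert (f i <= rsum k f) by (apply rsum_term_le; auto). specialize (H i H1). lra. Qed.

Lemma ip_lin : forall D u v c w, ip D (fun l => u l - c * v l) w = ip D u w - c * ip D v w.
Proof. intros. unfold ip. rewrite <- rsum_scal, <- rsum_minus. apply rsum_ext; intros; ring. Qed.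

Lemma ip_rsum : forall D q a F w,
  ip D (fun l => rsum q (fun j => a j * F j l)) w = rsum q (fun j => a j * ip D (F j) w).
Proof. intros. unfold ip. 
 rewrite (rsum_ext D _ (fun l => rsum q (fun j => a j * (F j l * w l)))).
 - rewrite rsum_swap. apply rsum_ext; intros. rewrite rsum_scal. auto.
 - intros. rewrite <- rsum_scalr. apply rsum_ext; intros; ring. Qed.

Lemma ip_sym : forall D u v, ip D u v = ip D v u.
Proof. intros; unfold ip; apply rsum_ext; intros; ring. Qed.

Lemma indep_prefix : forall D q w, indep D (S q) w -> indep D q w.
Proof. intros D q w H c Hc r Hr.
 assert (Hr' : Nat.ltb r q = true) by (apply Nat.ltb_lt; auto).
 assert (X : (fun t => if Nat.ltb t q then c t else 0) r = 0).
 { apply (H (fun t => if Nat.ltb t q then c t else 0)); [|lia]. intros. simpl. rewrite Nat.ltb_irrefl.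
   rewrite (rsum_ext q _ (fun r0 => c r0 * w r0 l)). rewrite (Hc l H0). lra.
   intros. apply Nat.ltb_lt in H1. rewrite H1; auto. }
 simpl in X. rewrite Hr' in X. auto. Qed.

Definition comb (q : nat) (B : nat -> nat -> R) (w : nat -> pt) (p : nat) : pt :=
  fun l => rsum q (fun t => B p t * w t l).

Lemma ip_sub : forall D u v w, ip D (fun l => u l - v l) w = ip D u w - ip D v w.
Proof. intros. unfold ip. rewrite <- rsum_minus. apply rsum_ext; intros; ring. Qed.

Lemma ip_ext : forall D u u' v, (forall l, (l < D)%nat -> u l = u' l) -> ip D u v = ip D u' v.
Proof. intros; unfold ip; apply rsum_ext; intros; rewrite H; auto. Qed.

Lemma ip_scal : forall D c u v, ip D (fun l => c * u l) v = c * ip D u v.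
Proof. intros; unfold ip; rewrite <- rsum_scal; apply rsum_ext; intros; ring. Qed.

Lemma dual_exists : forall D q w, indep D q w ->
  exists B, forall p r, (p < q)%nat -> (r < q)%nat ->
    ip D (comb q B w p) (w r) = if Nat.eqb p r then 1 else 0.
Proof.
 intros D q; induction q; intros w Hind.
 - exists (fun _ _ => 0). intros; lia.
 - destruct (IHq w (indep_prefix _ _ _ Hind)) as [B HB].
   set (psi := comb q B w).
   set (a := fun j => ip D (w q) (w j)).
   set (e := fun l => w q l - rsum q (fun j => a j * psi j l)).
   assert (Horth : forall r, (r < q)%nat -> ip D e (w r) = 0).
   { intros. unfold e. rewrite ip_sub, ip_rsum.
     rewrite (rsum_single q _ r); auto.
     - unfold psi. rewrite HB; auto. rewrite Nat.eqb_refl. unfold a. ring.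
     - intros. unfold psi. rewrite HB; auto. replace (Nat.eqb i r) with false. ring.
       symmetry; apply Nat.eqb_neq; auto. }
   set (Ec := fun t => if Nat.eqb t q then 1 else - rsum q (fun j => a j * B j t)).
   assert (He : forall l, e l = rsum (S q) (fun t => Ec t * w t l)).
   { intros. simpl. unfold Ec at 2. rewrite Nat.eqb_refl.
     rewrite (rsum_ext q _ (fun t => - rsum q (fun j => a j * B j t) * w t l)).
     - unfold e, psi, comb.
       rewrite (rsum_ext q (fun j => a j * rsum q (fun t => B j t * w t l)) (fun j => rsum q (fun t => a j * B j t * w t l))).
       + rewrite rsum_swap. rewrite (rsum_ext q (fun t => - rsum q (fun j => a j * B j t) * w t l) (fun t => - rsum q (fun j => a j * B j t * w t l))).
         * rewrite (rsum_ext q (fun t => - rsum q (fun j => a j * B j t * w t l)) (fun t => (-1) * rsum q (fun j => a j * B j t * w t l))) by (intros; ring).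
           rewrite rsum_scal. ring.
         * intros. rewrite <- Ropp_mult_distr_l, <- rsum_scalr. f_equal.
       + intros. rewrite <- rsum_scal. apply rsum_ext; intros; ring.
     - intros. unfold Ec. replace (Nat.eqb i q) with false; auto. symmetry; apply Nat.eqb_neq; lia. }
   set (ee := ip D e e).
   assert (Hee : ee <> 0).
   { intro H0. assert (Hz : forall l, (l < D)%nat -> e l = 0).
     { intros. assert (e l * e l = 0). apply (rsum_nonneg_zero D (fun l => e l * e l)); auto.
       intros; apply Rle_0_sqr. nra. }
     assert (Ec q = 0). apply (Hind Ec); [| lia]. intros. rewrite <- He. auto.
     unfold Ec in H. rewrite Nat.eqb_refl in H. lra. }
   assert (Heq : ip D e (w q) = ee).
   { unfold ee. assert (ip D e e = ip D (fun l => w q l - rsum q (fun j => a j * psi j l)) e) by reflexivity.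
     rewrite H. rewrite ip_sub, ip_rsum.
     rewrite (rsum_zero q (fun j => a j * ip D (psi j) e)). rewrite (ip_sym D (w q)); ring.
     intros. unfold psi, comb. rewrite ip_rsum. rewrite rsum_zero. ring.
     intros. rewrite ip_sym, Horth; auto. ring. }
   exists (fun p t => if Nat.eqb p q then Ec t / ee else (if Nat.eqb t q then 0 else B p t) - ip D (psi p) (w q) * Ec t / ee).
   intros p r Hp Hr.
   destruct (Nat.eq_dec p q).
   + subst p. rewrite (ip_ext D _ (fun l => / ee * e l)).
     * rewrite ip_scal. destruct (Nat.eq_dec r q).
       -- subst. rewrite Heq, Nat.eqb_refl. field; auto.
       -- rewrite Horth by lia. replace (Nat.eqb q r) with false. ring. symmetry; apply Nat.eqb_neq; lia.
     * intros. unfold comb. rewrite Nat.eqb_refl. rewrite He. rewrite <- rsum_scal. apply rsum_ext; intros. unfold Rdiv; ring.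
   + assert (Hp' : (p < q)%nat) by lia.
     rewrite (ip_ext D _ (fun l => psi p l - ip D (psi p) (w q) * (/ ee * e l))).
     * rewrite ip_sub, ip_scal, ip_scal. destruct (Nat.eq_dec r q).
       -- subst. rewrite Heq. replace (Nat.eqb p q) with false. field; auto. symmetry; apply Nat.eqb_neq; lia.
       -- rewrite Horth by lia. unfold psi. rewrite HB by lia. ring.
     * intros. unfold comb. replace (Nat.eqb p q) with false by (symmetry; apply Nat.eqb_neq; lia).
       rewrite He. simpl. rewrite Nat.eqb_refl.
       rewrite (rsum_ext q _ (fun t => B p t * w t l - ip D (psi p) (w q) * / ee * (Ec t * w t l))).
       -- rewrite rsum_minus, rsum_scal. unfold psi, comb. unfold Rdiv. ring.
       -- intros. replace (Nat.eqb i q) with false by (symmetry; apply Nat.eqb_neq; lia). unfold Rdiv; ring.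
Qed.


Definition eqI (u v : pt) : R := if excluded_middle_informative (u = v) then 1 else 0.
Definition inI (v : pt) (s : list pt) : R := if excluded_middle_informative (In v s) then 1 else 0.

Lemma eqI_sym : forall u v, eqI u v = eqI v u.
Proof. intros; unfold eqI. destruct (excluded_middle_informative (u = v)), (excluded_middle_informative (v = u)); subst; auto; congruence. Qed.

Lemma sum_eqI_in : forall (L : list pt) p0 F, NoDup L -> (p0 < length L)%nat ->
  rsum (length L) (fun p => eqI (nth p L zero_pt) (nth p0 L zero_pt) * F p) = F p0.
Proof. intros. rewrite (rsum_single _ _ p0); auto.
 - unfold eqI. destruct (excluded_middle_informative _); [ring|congruence].
 - intros. unfold eqI. destruct (excluded_middle_informative _); [|ring].
   exfalso. apply H2. apply (proj1 (NoDup_nth L zero_pt) H); auto. Qed.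

Lemma sum_eqI_out : forall (L : list pt) v F, ~ In v L ->
  rsum (length L) (fun p => eqI (nth p L zero_pt) v * F p) = 0.
Proof. intros. apply rsum_zero. intros. unfold eqI. destruct (excluded_middle_informative _); [|ring].
 exfalso; apply H; subst; apply nth_In; auto. Qed.

Definition setup (N : nat) (K : list (list pt)) (V : list pt) : Prop :=
  is_complex N K /\ NoDup V /\ (forall s v, In s K -> In v s -> In v V) /\ (forall v, In v V -> in_RN N v).

Lemma rsum_delta : forall k i a, (i < k)%nat -> rsum k (fun m => if Nat.eq_dec m i then a else 0) = a.
Proof. intros. rewrite (rsum_single _ _ i H). destruct (Nat.eq_dec i i); congruence.
 intros. destruct (Nat.eq_dec i0 i); congruence. Qed.

Lemma aff_indep_nodup : forall s, aff_indep s -> NoDup s.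
Proof. intros s H. apply (NoDup_nth s zero_pt). intros i j Hi Hj Heq.
 destruct (Nat.eq_dec i j); auto. exfalso.
 set (c := fun k => if Nat.eq_dec k i then 1 else if Nat.eq_dec k j then -1 else 0).
 assert (Hc : c i = 0).
 { apply H; auto.
   - rewrite (rsum_ext _ _ (fun k => (if Nat.eq_dec k i then 1 else 0) + (if Nat.eq_dec k j then -1 else 0))).
     + rewrite rsum_plus. rewrite (rsum_delta _ _ _ Hi), (rsum_delta _ _ _ Hj). lra.
     + intros. unfold c. destruct (Nat.eq_dec i0 i), (Nat.eq_dec i0 j); subst; try congruence; lra.
   - intros jj. rewrite (rsum_ext _ _ (fun k => (if Nat.eq_dec k i then nth i s zero_pt jj else 0) + (if Nat.eq_dec k j then - nth j s zero_pt jj else 0))).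
     + rewrite rsum_plus. rewrite (rsum_delta _ _ _ Hi), (rsum_delta _ _ _ Hj). rewrite Heq; lra.
     + intros. unfold c. destruct (Nat.eq_dec i0 i), (Nat.eq_dec i0 j); subst; try congruence; lra. }
 unfold c in Hc. destruct (Nat.eq_dec i i); [lra|congruence]. Qed.

Definition crep (K : list (list pt)) (V : list pt) (x : pt) (c : nat -> R) : Prop :=
 exists s, In s K /\ (forall i, (i < length V)%nat -> c i <> 0 -> In (nth i V zero_pt) s) /\
 (forall i, (i < length V)%nat -> 0 <= c i) /\ rsum (length V) c = 1 /\
 forall j, x j = rsum (length V) (fun i => c i * nth i V zero_pt j).

Lemma eqI_nonneg : forall u v, 0 <= eqI u v.
Proof. intros; unfold eqI; destruct (excluded_middle_informative _); lra. Qed.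

Lemma T1 : forall (V s : list pt) (w : nat -> R) (G : pt -> R), NoDup V ->
  (forall p, (p < length s)%nat -> In (nth p s zero_pt) V) ->
  rsum (length V) (fun i => rsum (length s) (fun p => eqI (nth p s zero_pt) (nth i V zero_pt) * w p) * G (nth i V zero_pt))
  = rsum (length s) (fun p => w p * G (nth p s zero_pt)).
Proof. intros.
 rewrite (rsum_ext _ _ (fun i => rsum (length s) (fun p => w p * (eqI (nth i V zero_pt) (nth p s zero_pt) * G (nth i V zero_pt))))).
 - rewrite rsum_swap. apply rsum_ext. intros p Hp. rewrite rsum_scal. f_equal.
   destruct (In_nth V (nth p s zero_pt) zero_pt (H0 p Hp)) as [i0 [Hi0 Heq]]. rewrite <- Heq.
   apply (sum_eqI_in V i0 (fun i => G (nth i V zero_pt))); auto.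
 - intros. rewrite <- rsum_scalr. apply rsum_ext; intros. rewrite eqI_sym. ring. Qed.

Lemma T2 : forall (V s : list pt) (c : nat -> R) (G : pt -> R), NoDup s ->
  (forall i, (i < length V)%nat -> c i <> 0 -> In (nth i V zero_pt) s) ->
  rsum (length s) (fun p => rsum (length V) (fun i => eqI (nth i V zero_pt) (nth p s zero_pt) * c i) * G (nth p s zero_pt))
  = rsum (length V) (fun i => c i * G (nth i V zero_pt)).
Proof. intros.
 rewrite (rsum_ext _ _ (fun p => rsum (length V) (fun i => c i * (eqI (nth p s zero_pt) (nth i V zero_pt) * G (nth p s zero_pt))))).
 - rewrite rsum_swap. apply rsum_ext. intros i Hi. rewrite rsum_scal.
   destruct (Req_dec (c i) 0) as [E|E]. rewrite E; ring. f_equal.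
   destruct (In_nth s (nth i V zero_pt) zero_pt (H0 i Hi E)) as [p0 [Hp0 Heq]]. rewrite <- Heq.
   apply (sum_eqI_in s p0 (fun p => G (nth p s zero_pt))); auto.
 - intros. rewrite <- rsum_scalr. apply rsum_ext; intros. rewrite eqI_sym. ring. Qed.

Definition cT (V s : list pt) (w : nat -> R) (i : nat) : R :=
  rsum (length s) (fun p => eqI (nth p s zero_pt) (nth i V zero_pt) * w p).
Definition wT (V s : list pt) (c : nat -> R) (p : nat) : R :=
  rsum (length V) (fun i => eqI (nth i V zero_pt) (nth p s zero_pt) * c i).

Lemma rsum_nonzero : forall k f, rsum k f <> 0 -> exists i, (i < k)%nat /\ f i <> 0.
Proof. intros. apply NNPP. intro H0. apply H. apply rsum_zero. intros. apply NNPP. intro. apply H0. eauto. Qed.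

Lemma eqI_nz : forall u v, eqI u v <> 0 -> u = v.
Proof. unfold eqI; intros. destruct (excluded_middle_informative _); auto. lra. Qed.

Lemma conv_crep : forall N K V s x w, setup N K V -> In s K ->
  (forall p, (p < length s)%nat -> 0 <= w p) -> rsum (length s) w = 1 ->
  (forall j, x j = rsum (length s) (fun p => w p * nth p s zero_pt j)) ->
  crep K V x (cT V s w).
Proof. intros N K V s x w [HK [HV [HsV HVN]]] Hs Hw Hw1 Hx.
 assert (Hin : forall p, (p < length s)%nat -> In (nth p s zero_pt) V) by (intros; eapply HsV; eauto; apply nth_In; auto).
 exists s. split; auto. split; [|split; [|split]].
 - intros i Hi Hc. unfold cT in Hc. destruct (rsum_nonzero _ _ Hc) as [p [Hp Hf]].
   assert (eqI (nth p s zero_pt) (nth i V zero_pt) <> 0) by (intro E; apply Hf; rewrite E; ring).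
   apply eqI_nz in H. rewrite <- H. apply nth_In; auto.
 - intros. unfold cT. apply rsum_nonneg. intros. apply Rmult_le_pos; auto. apply eqI_nonneg.
 - transitivity (rsum (length s) (fun p => w p * 1)).
   + rewrite <- (T1 V s w (fun _ => 1)); auto. apply rsum_ext; intros; unfold cT; ring.
   + rewrite (rsum_ext _ _ w) by (intros; ring). auto.
 - intros j. rewrite Hx. symmetry. apply (T1 V s w (fun v => v j)); auto. Qed.

Lemma crep_conv : forall N K V s x c, setup N K V -> In s K ->
  (forall i, (i < length V)%nat -> c i <> 0 -> In (nth i V zero_pt) s) ->
  (forall i, (i < length V)%nat -> 0 <= c i) -> rsum (length V) c = 1 ->
  (forall j, x j = rsum (length V) (fun i => c i * nth i V zero_pt j)) -> conv s x.
Proof. intros N K V s x c [HK [HV [HsV HVN]]] Hs Hsup Hc Hc1 Hx.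
 assert (Hnd : NoDup s) by (apply aff_indep_nodup; apply (proj1 HK); auto).
 exists (wT V s c). split; [|split].
 - intros. unfold wT. apply rsum_nonneg. intros. apply Rmult_le_pos; auto. apply eqI_nonneg.
 - transitivity (rsum (length V) (fun i => c i * 1)).
   + rewrite <- (T2 V s c (fun _ => 1)); auto. apply rsum_ext; intros; unfold wT; ring.
   + rewrite (rsum_ext _ _ c) by (intros; ring). auto.
 - intros j. rewrite Hx. symmetry. apply (T2 V s c (fun v => v j)); auto. Qed.

Lemma supp_unique : forall N K V s d, setup N K V -> In s K ->
  (forall i, (i < length V)%nat -> d i <> 0 -> In (nth i V zero_pt) s) ->
  rsum (length V) d = 0 -> (forall j, rsum (length V) (fun i => d i * nth i V zero_pt j) = 0) ->
  forall i, (i < length V)%nat -> d i = 0.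
Proof. intros N K V s d Hset Hs Hsup Hd0 Hdj i Hi.
 destruct Hset as [HK [HV [HsV HVN]]].
 assert (Hai : aff_indep s) by (apply (proj1 HK); auto).
 assert (Hnd : NoDup s) by (apply aff_indep_nodup; auto).
 assert (Hcc : forall p, (p < length s)%nat -> wT V s d p = 0).
 { apply Hai.
   - transitivity (rsum (length V) (fun i => d i * 1)).
     + rewrite <- (T2 V s d (fun _ => 1)); auto. apply rsum_ext; intros; unfold wT; ring.
     + rewrite (rsum_ext _ _ d) by (intros; ring). auto.
   - intros j. rewrite <- (Hdj j). apply (T2 V s d (fun v => v j)); auto. }
 apply NNPP; intro E.
 destruct (In_nth s (nth i V zero_pt) zero_pt (Hsup i Hi E)) as [p0 [Hp0 Heq]].
 specialize (Hcc p0 Hp0). unfold wT in Hcc. rewrite Heq in Hcc.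
 rewrite (sum_eqI_in V i d) in Hcc; auto. Qed.

Lemma crep_unique : forall N K V x c c', setup N K V -> crep K V x c -> crep K V x c' ->
  forall i, (i < length V)%nat -> c i = c' i.
Proof. intros N K V x c c' Hset Hc Hc'.
 destruct Hc as [s [Hs [Hsup [Hnn [H1 Hx]]]]]. destruct Hc' as [t [Ht [Htsup [Htnn [Ht1 Htx]]]]].
 assert (Cs : conv s x) by (eapply crep_conv; eauto).
 assert (Ct : conv t x) by (eapply crep_conv; eauto).
 pose proof Hset as [HK [HV [HsV HVN]]].
 destruct (proj2 (proj2 HK) s t Hs Ht) as [u [Hu Hux]].
 destruct (proj1 (Hux x) (conj Cs Ct)) as [e [He [He1 Hex]]].
 assert (Hin : forall q, (q < length u)%nat -> In (nth q u zero_pt) V).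
 { intros. apply (HsV s); auto. apply (proj1 (Hu _)). apply nth_In; auto. }
 set (c'' := cT V u e).
 assert (Hsum : rsum (length V) c'' = 1).
 { transitivity (rsum (length u) (fun p => e p * 1)).
   + rewrite <- (T1 V u e (fun _ => 1)); auto. apply rsum_ext; intros; unfold c'', cT; ring.
   + rewrite (rsum_ext _ _ e) by (intros; ring). auto. }
 assert (Hrep : forall j, x j = rsum (length V) (fun i => c'' i * nth i V zero_pt j)).
 { intros j. rewrite Hex. symmetry. apply (T1 V u e (fun v => v j)); auto. }
 assert (Hsupu : forall i, (i < length V)%nat -> c'' i <> 0 -> In (nth i V zero_pt) u).
 { intros i Hi Hc. unfold c'', cT in Hc. destruct (rsum_nonzero _ _ Hc) as [p [Hp Hf]].
   assert (eqI (nth p u zero_pt) (nth i V zero_pt) <> 0) by (intro E; apply Hf; rewrite E; ring).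
   apply eqI_nz in H. rewrite <- H. apply nth_In; auto. }
 assert (G : forall (s0 : list pt) (c0 : nat -> R), In s0 K ->
   (forall i, (i < length V)%nat -> c0 i <> 0 -> In (nth i V zero_pt) s0) ->
   (forall i, (i < length V)%nat -> In (nth i V zero_pt) u -> In (nth i V zero_pt) s0) ->
   rsum (length V) c0 = 1 -> (forall j, x j = rsum (length V) (fun i => c0 i * nth i V zero_pt j)) ->
   forall i, (i < length V)%nat -> c0 i = c'' i).
 { intros s0 c0 Hs0 Hsup0 Hus0 Hc01 Hx0 i Hi.
   assert (c0 i - c'' i = 0); [|lra].
   apply (supp_unique N K V s0 (fun i => c0 i - c'' i)); auto.
   - intros i0 Hi0 Hd. destruct (Req_dec (c0 i0) 0).
     + apply Hus0; auto. apply Hsupu; auto. intro; apply Hd; lra.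
     + apply Hsup0; auto.
   - rewrite rsum_minus. lra.
   - intros j. rewrite (rsum_ext _ _ (fun i => c0 i * nth i V zero_pt j - c'' i * nth i V zero_pt j)) by (intros; ring).
     rewrite rsum_minus. rewrite <- Hx0, <- Hrep. ring. }
 intros i Hi. rewrite (G s c), (G t c'); auto.
 - intros. apply (Hu _); auto.
 - intros. apply (Hu _); auto. Qed.

Definition xhat (N : nat) (x : pt) : pt := fun l => if Nat.eqb l N then 1 else x l.

Lemma dist_nonneg : forall N x y, 0 <= dist N x y.
Proof. intros. unfold dist. apply rsum_nonneg. intros. apply Rabs_pos. Qed.

Lemma coord_le_dist : forall N x y l, (l < N)%nat -> Rabs (x l - y l) <= dist N x y.
Proof. intros. unfold dist. apply (rsum_term_le N (fun i => Rabs (x i - y i))); auto. intros; apply Rabs_pos. Qed.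

Lemma xhat_diff : forall N x y l, (l < S N)%nat -> Rabs (xhat N x l - xhat N y l) <= dist N x y.
Proof. intros. unfold xhat. destruct (Nat.eqb l N) eqn:E.
 - replace (1 - 1) with 0 by ring. rewrite Rabs_R0. apply dist_nonneg.
 - apply Nat.eqb_neq in E. apply coord_le_dist. lia. Qed.

Lemma ip_lip : forall N psi x y, Rabs (ip (S N) psi (xhat N x) - ip (S N) psi (xhat N y)) <=
   rsum (S N) (fun l => Rabs (psi l)) * dist N x y.
Proof. intros. unfold ip. rewrite <- rsum_minus. eapply Rle_trans. apply rsum_abs.
 rewrite <- rsum_scalr. apply rsum_le. intros. rewrite <- Rmult_minus_distr_l, Rabs_mult.
 apply Rmult_le_compat_l. apply Rabs_pos. apply xhat_diff; auto. Qed.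

Lemma simplex_coords : forall N K V s, setup N K V -> In s K ->
  exists (lam : nat -> pt -> R) (C : R), 0 <= C /\
   (forall p x y, (p < length s)%nat -> Rabs (lam p x - lam p y) <= C * dist N x y) /\
   (forall x w, rsum (length s) w = 1 -> (forall j, x j = rsum (length s) (fun r => w r * nth r s zero_pt j)) ->
      forall p, (p < length s)%nat -> lam p x = w p).
Proof. intros N K V s Hset Hs. pose proof Hset as [HK [HV [HsV HVN]]].
 set (ws := fun r l => if Nat.eqb l N then 1 else nth r s zero_pt l).
 assert (Hai : aff_indep s) by (apply (proj1 HK); auto).
 assert (HsN : forall r j, (r < length s)%nat -> (N <= j)%nat -> nth r s zero_pt j = 0).
 { intros. apply (HVN _). apply (HsV s); auto. apply nth_In; auto. auto. }
 assert (Hind : indep (S N) (length s) ws).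
 { intros cc Hcc. apply Hai.
   - rewrite <- (Hcc N) by lia. apply rsum_ext; intros. unfold ws. rewrite Nat.eqb_refl. ring.
   - intros j. destruct (lt_dec j N).
     + rewrite <- (Hcc j) by lia. apply rsum_ext; intros. unfold ws. replace (Nat.eqb j N) with false; auto.
       symmetry; apply Nat.eqb_neq; lia.
     + apply rsum_zero. intros. rewrite HsN by lia. ring. }
 destruct (dual_exists _ _ _ Hind) as [B HB].
 set (psi := comb (length s) B ws).
 exists (fun p x => ip (S N) (psi p) (xhat N x)).
 exists (rsum (length s) (fun p => rsum (S N) (fun l => Rabs (psi p l)))).
 split; [|split].
 - apply rsum_nonneg; intros. apply rsum_nonneg; intros. apply Rabs_pos.
 - intros. eapply Rle_trans. apply ip_lip. apply Rmult_le_compat_r. apply dist_nonneg.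
   apply (rsum_term_le _ (fun p => rsum (S N) (fun l => Rabs (psi p l)))); auto.
   intros. apply rsum_nonneg; intros. apply Rabs_pos.
 - intros x w Hw1 Hx p Hp.
   rewrite (ip_sym). rewrite (ip_ext _ _ (fun l => rsum (length s) (fun r => w r * ws r l))).
   + rewrite ip_rsum. rewrite (rsum_single _ _ p Hp).
     * rewrite ip_sym. unfold psi. rewrite HB by auto. rewrite Nat.eqb_refl. ring.
     * intros. rewrite ip_sym. unfold psi. rewrite HB by auto. replace (Nat.eqb p i) with false. ring.
       symmetry; apply Nat.eqb_neq; lia.
   + intros. unfold xhat, ws. destruct (Nat.eqb l N).
     * rewrite (rsum_ext _ _ w) by (intros; ring); auto.
     * rewrite Hx. auto. Qed.

Lemma three_nonneg_zero : forall a b c, 0 <= a -> 0 <= b -> 0 <= c -> a + b + c = 0 -> a = 0 /\ b = 0 /\ c = 0.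
Proof. intros; repeat split; lra. Qed.

Lemma conv_closed : forall N K V s x, setup N K V -> In s K -> in_RN N x -> ~ conv s x ->
  exists d, 0 < d /\ forall y, dist N x y < d -> ~ conv s y.
Proof. intros N K V s x Hset Hs HxN Hnc.
 destruct (simplex_coords N K V s Hset Hs) as [lam [C [HC [Hlip Hco]]]].
 set (q := length s).
 set (r := fun z => rsum N (fun j => Rabs (z j - rsum q (fun p => lam p z * nth p s zero_pt j)))
     + rsum q (fun p => Rabs (lam p z) - lam p z) + Rabs (1 - rsum q (fun p => lam p z))).
 assert (P1 : 0 <= rsum N (fun j => Rabs (x j - rsum q (fun p => lam p x * nth p s zero_pt j))))
   by (apply rsum_nonneg; intros; apply Rabs_pos).
 assert (P2 : 0 <= rsum q (fun p => Rabs (lam p x) - lam p x))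
   by (apply rsum_nonneg; intros; pose proof (Rle_abs (lam i x)); lra).
 assert (P3 : 0 <= Rabs (1 - rsum q (fun p => lam p x))) by apply Rabs_pos.
 assert (Hrpos : 0 < r x).
 { destruct (Rle_lt_or_eq_dec 0 (r x)) as [|E]; [unfold r; lra|auto|].
   exfalso. apply Hnc. symmetry in E. unfold r in E.
   destruct (three_nonneg_zero _ _ _ P1 P2 P3 E) as [E1 [E2 E3]].
   exists (fun p => lam p x). split; [|split].
   - intros. assert (Hnn : forall p, (p < q)%nat -> 0 <= Rabs (lam p x) - lam p x) by (intros; pose proof (Rle_abs (lam p x)); lra).
     pose proof (rsum_nonneg_zero _ _ Hnn E2 i H) as Hz. simpl in Hz.
     destruct (Rcase_abs (lam i x)). rewrite Rabs_left in Hz; lra. lra.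
   - apply Rabs_eq_0 in E3. unfold q in *; lra.
   - intros j. destruct (lt_dec j N).
     + pose proof (rsum_nonneg_zero _ _ (fun p Hp => Rabs_pos _) E1 j l). apply Rabs_eq_0 in H. unfold q in *; lra.
     + rewrite HxN by lia. symmetry. apply rsum_zero. intros.
       destruct Hset as [HK [HV [HsV HVN]]]. rewrite (HVN (nth i s zero_pt)). ring.
       apply (HsV s); auto. apply nth_In; auto. lia. }
 set (S1 := rsum N (fun j => rsum q (fun p => Rabs (nth p s zero_pt j)))).
 assert (HS1 : 0 <= S1) by (apply rsum_nonneg; intros; apply rsum_nonneg; intros; apply Rabs_pos).
 set (Cq := rsum q (fun _ => C)).
 assert (HCq : 0 <= Cq) by (apply rsum_nonneg; intros; auto).
 set (L := 1 + C * S1 + 3 * Cq).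
 assert (HL : 1 <= L) by (unfold L; pose proof (Rmult_le_pos _ _ HC HS1); lra).
 exists (r x / L). split. apply Rdiv_lt_0_compat; lra.
 intros y Hd Hcy. destruct Hcy as [w [Hw [Hw1 Hy]]].
 assert (Hlw : forall p, (p < q)%nat -> lam p y = w p) by (apply Hco; auto).
 set (d := dist N x y). assert (Hd0 : 0 <= d) by apply dist_nonneg.
 assert (Hlx : forall p, (p < q)%nat -> Rabs (lam p x - w p) <= C * d).
 { intros. rewrite <- Hlw by auto. apply Hlip; auto. }
 assert (HsumC : rsum q (fun p => Rabs (lam p x - w p)) <= Cq * d).
 { unfold Cq. rewrite <- rsum_scalr. apply rsum_le; auto. }
 assert (B1 : rsum N (fun j => Rabs (x j - rsum q (fun p => lam p x * nth p s zero_pt j))) <= d + C * S1 * d).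
 { apply Rle_trans with (rsum N (fun j => Rabs (x j - y j) + rsum q (fun p => Rabs (nth p s zero_pt j)) * (C * d))).
   - apply rsum_le. intros j Hj. rewrite Hy.
     replace (x j - rsum q (fun p => lam p x * nth p s zero_pt j)) with
       ((x j - rsum q (fun r0 => w r0 * nth r0 s zero_pt j)) - rsum q (fun p => (lam p x - w p) * nth p s zero_pt j)).
     + eapply Rle_trans. apply Rabs_triang. rewrite Rabs_Ropp. apply Rplus_le_compat_l.
       eapply Rle_trans. apply rsum_abs. rewrite <- rsum_scalr. apply rsum_le. intros. rewrite Rabs_mult.
       rewrite Rmult_comm. apply Rmult_le_compat_l. apply Rabs_pos. auto.
     + rewrite (rsum_ext q (fun p => (lam p x - w p) * nth p s zero_pt j) (fun p => lam p x * nth p s zero_pt j - w p * nth p s zero_pt j)) by (intros; ring).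
       rewrite rsum_minus. ring.
   - rewrite rsum_plus. fold d. unfold dist in d. apply Rplus_le_compat. unfold d, dist; lra.
     rewrite rsum_scalr. unfold S1. lra. }
 assert (B2 : rsum q (fun p => Rabs (lam p x) - lam p x) <= 2 * (Cq * d)).
 { apply Rle_trans with (rsum q (fun p => 2 * Rabs (lam p x - w p))).
   - apply rsum_le. intros. assert (0 <= w i) by auto.
     destruct (Rcase_abs (lam i x)). rewrite Rabs_left by auto.
     pose proof (Rle_abs (lam i x - w i)). pose proof (Rle_abs (-(lam i x - w i))). rewrite Rabs_Ropp in H2. lra.
     rewrite Rabs_right by auto. pose proof (Rabs_pos (lam i x - w i)). lra.
   - rewrite rsum_scal. lra. }
 assert (B3 : Rabs (1 - rsum q (fun p => lam p x)) <= Cq * d).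
 { rewrite <- Hw1. rewrite <- rsum_minus. eapply Rle_trans. apply rsum_abs.
   eapply Rle_trans; [|apply HsumC]. apply rsum_le. intros. rewrite <- Rabs_Ropp. right; f_equal; ring. }
 assert (r x <= L * d) by (unfold r, L; nra).
 assert (d < r x / L) by auto.
 apply (Rmult_lt_compat_l L) in H0; [|lra]. replace (L * (r x / L)) with (r x) in H0 by (field; lra). lra. Qed.

Definition mu (K : list (list pt)) (V : list pt) (x : pt) : nat -> R :=
  match excluded_middle_informative (exists c, crep K V x c) with
  | left H => proj1_sig (constructive_indefinite_description _ H)
  | right _ => fun _ => 0 end.

Lemma mu_crep : forall K V x, (exists c, crep K V x c) -> crep K V x (mu K V x).
Proof. intros. unfold mu. destruct (excluded_middle_informative _); [|contradiction].
 apply (proj2_sig (constructive_indefinite_description _ e)). Qed.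

Lemma mu_eq : forall N K V x c, setup N K V -> crep K V x c -> forall i, (i < length V)%nat -> mu K V x i = c i.
Proof. intros. eapply crep_unique; eauto. apply mu_crep; eauto. Qed.

Lemma poly_crep : forall N K V x, setup N K V -> polyhedron K x -> crep K V x (mu K V x).
Proof. intros N K V x Hset [s [Hs [w [Hw [Hw1 Hx]]]]]. apply mu_crep. eexists. eapply conv_crep; eauto. Qed.

Lemma poly_inRN : forall N K x, is_complex N K -> polyhedron K x -> in_RN N x.
Proof. intros N K x HK [s [Hs [w [Hw [Hw1 Hx]]]]] j Hj. rewrite Hx. apply rsum_zero. intros.
 rewrite (proj2 (proj2 (proj1 HK s Hs)) (nth i s zero_pt)). ring. apply nth_In; auto. auto. Qed.

Lemma list_delta : forall (A : Type) (L : list A) (P : A -> R -> Prop),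
  (forall a d d', P a d -> 0 < d' <= d -> P a d') ->
  (forall a, In a L -> exists d, 0 < d /\ P a d) -> exists d, 0 < d /\ forall a, In a L -> P a d.
Proof. intros A L P Hmon. induction L; intros.
 - exists 1. split; [lra|]. intros a H0; destruct H0.
 - destruct IHL as [d1 [Hd1 HP1]]. intros; apply H; simpl; auto.
   destruct (H a) as [d2 [Hd2 HP2]]. simpl; auto.
   exists (Rmin d1 d2). split. apply Rmin_pos; auto.
   intros b [E|Hb].
   + subst. apply (Hmon b d2); auto. split. apply Rmin_pos; auto. apply Rmin_r.
   + apply (Hmon b d1); auto. split. apply Rmin_pos; auto. apply Rmin_l. Qed.

Lemma mu_cont : forall N K V x, setup N K V -> polyhedron K x -> forall i, (i < length V)%nat ->
  forall eps, 0 < eps -> exists d, 0 < d /\ forall y, polyhedron K y -> dist N x y < d ->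
    Rabs (mu K V y i - mu K V x i) < eps.
Proof. intros N K V x Hset Hx i Hi eps Heps.
 destruct (list_delta _ K (fun s d => forall y, conv s y -> dist N x y < d -> Rabs (mu K V y i - mu K V x i) < eps)) as [d [Hd HP]].
 - intros. apply H; auto. lra.
 - intros s Hs. destruct (classic (conv s x)) as [Cx|Cx].
   + destruct (simplex_coords N K V s Hset Hs) as [lam [C [HC [Hlip Hco]]]].
     set (Cq := rsum (length s) (fun _ => C)).
     assert (HCq : 0 <= Cq) by (apply rsum_nonneg; intros; auto).
     assert (Hmu : forall z, conv s z -> mu K V z i = rsum (length s) (fun p => eqI (nth p s zero_pt) (nth i V zero_pt) * lam p z)).
     { intros z [w [Hw [Hw1 Hz]]]. rewrite (mu_eq N K V z (cT V s w)); auto.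
       - unfold cT. apply rsum_ext. intros. rewrite (Hco z w); auto.
       - eapply conv_crep; eauto. }
     exists (eps / (Cq + 1)). split. apply Rdiv_lt_0_compat; lra.
     intros y Cy Hd. rewrite (Hmu y Cy), (Hmu x Cx). rewrite <- rsum_minus.
     eapply Rle_lt_trans. apply rsum_abs.
     apply Rle_lt_trans with (rsum (length s) (fun _ => C * dist N x y)).
     * apply rsum_le. intros. rewrite <- Rmult_minus_distr_l, Rabs_mult.
       assert (Rabs (eqI (nth i0 s zero_pt) (nth i V zero_pt)) <= 1).
       { unfold eqI. destruct (excluded_middle_informative _); rewrite ?Rabs_R1, ?Rabs_R0; lra. }
       rewrite <- (Rabs_Ropp (lam i0 y - lam i0 x)). replace (- (lam i0 y - lam i0 x)) with (lam i0 x - lam i0 y) by ring.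
       pose proof (Hlip i0 x y H). pose proof (Rabs_pos (lam i0 x - lam i0 y)). pose proof (Rabs_pos (eqI (nth i0 s zero_pt) (nth i V zero_pt))).
       nra.
     * rewrite rsum_scalr. fold Cq. pose proof (dist_nonneg N x y).
       apply Rle_lt_trans with (Cq * (eps / (Cq + 1))). apply Rmult_le_compat_l; lra.
       replace (Cq * (eps / (Cq + 1))) with (eps * (Cq / (Cq + 1))) by (field; lra).
       rewrite <- (Rmult_1_r eps) at 2. apply Rmult_lt_compat_l; auto.
       apply (Rmult_lt_reg_r (Cq + 1)); [lra|]. unfold Rdiv. rewrite Rmult_assoc, Rinv_l; lra.
   + destruct (conv_closed N K V s x Hset Hs (poly_inRN N K x (proj1 Hset) Hx) Cx) as [d [Hd Hn]].
     exists d. split; auto. intros y Cy Hy. exfalso. eapply Hn; eauto.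
 - exists d. split; auto. intros y [s [Hs Cy]] Hy. eapply HP; eauto. Qed.


Lemma bit_high : forall j p, (j < 2 ^ p)%nat -> Nat.testbit j p = false.
Proof. intros. rewrite <- (Nat.mod_small j (2 ^ p)) by auto. apply Nat.mod_pow2_bits_high. lia. Qed.

Lemma bit_add_low : forall j p i, (j < 2 ^ p)%nat -> (i < p)%nat -> Nat.testbit (j + 2 ^ p) i = Nat.testbit j i.
Proof. intros. rewrite <- (Nat.mod_pow2_bits_low _ p) by auto.
 replace ((j + 2 ^ p) mod 2 ^ p)%nat with j; auto.
 rewrite <- (Nat.mul_1_l (2 ^ p)) at 1. rewrite Nat.Div0.mod_add.
 rewrite Nat.mod_small; auto. Qed.

Lemma bit_add_top : forall j p, (j < 2 ^ p)%nat -> Nat.testbit (j + 2 ^ p) p = true.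
Proof. intros. apply (Nat.testbit_unique _ _ _ j 0); auto. Qed.

Lemma bit_above : forall j p i, (j < 2 ^ p)%nat -> (p <= i)%nat -> Nat.testbit j i = false.
Proof. intros. rewrite <- (Nat.mod_small j (2 ^ p)) by auto. apply Nat.mod_pow2_bits_high. lia. Qed.

Fixpoint minS (nu : nat -> R) (p j : nat) (c : R) : R :=
  match p with O => c | S p' => if Nat.testbit j p' then Rmin (nu p') (minS nu p' j c) else minS nu p' j c end.
Fixpoint maxS (nu : nat -> R) (p j : nat) : R :=
  match p with O => 0 | S p' => if Nat.testbit j p' then maxS nu p' j else Rmax (nu p') (maxS nu p' j) end.
Fixpoint cnt (p j : nat) : nat :=
  match p with O => O | S p' => ((if Nat.testbit j p' then 1 else 0) + cnt p' j)%nat end.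

Definition Tz (nu : nat -> R) (nv j : nat) : R := Rmax 0 (minS nu nv j 1 - maxS nu nv j).

Lemma minS_low : forall nu p q j j' c, (p <= q)%nat -> (forall i, (i < q)%nat -> Nat.testbit j i = Nat.testbit j' i) ->
  minS nu p j c = minS nu p j' c.
Proof. induction p; intros; simpl; auto. rewrite (H0 p) by lia. rewrite (IHp q j j') by (auto; lia). auto. Qed.

Lemma maxS_low : forall nu p q j j', (p <= q)%nat -> (forall i, (i < q)%nat -> Nat.testbit j i = Nat.testbit j' i) ->
  maxS nu p j = maxS nu p j'.
Proof. induction p; intros; simpl; auto. rewrite (H0 p) by lia. rewrite (IHp q j j') by (auto; lia). auto. Qed.

Lemma minS_min : forall nu p j a c, Rmin a (minS nu p j c) = minS nu p j (Rmin a c).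
Proof. induction p; intros; simpl; auto. destruct (Nat.testbit j p); auto.
 rewrite <- IHp. rewrite !Rmin_assoc. rewrite (Rmin_comm a (nu p)). auto. Qed.

Lemma pair_id : forall A B v, Rmax 0 (A - Rmax v B) + Rmax 0 (Rmin v A - B) = Rmax 0 (A - B).
Proof. intros. unfold Rmax, Rmin.
 destruct (Rle_dec v B); destruct (Rle_dec v A);
 repeat match goal with |- context [Rle_dec ?a ?b] => destruct (Rle_dec a b) end; lra. Qed.

Lemma rsum_pow2 : forall p f, rsum (2 ^ S p) f = rsum (2 ^ p) f + rsum (2 ^ p) (fun j => f (j + 2 ^ p)%nat).
Proof. intros. replace (2 ^ S p)%nat with (2 ^ p + 2 ^ p)%nat by (simpl; lia).
 rewrite rsum_add_range. f_equal. apply rsum_ext; intros. f_equal. lia. Qed.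

Lemma layer_H : forall nu p c, 0 <= c ->
  rsum (2 ^ p) (fun j => Rmax 0 (minS nu p j c - maxS nu p j)) = c.
Proof. intros nu p; induction p; intros.
 - simpl. unfold Rmax. destruct (Rle_dec 0 (c - 0)); lra.
 - rewrite rsum_pow2. transitivity (rsum (2^p) (fun j => Rmax 0 (minS nu p j c - maxS nu p j))); [|apply IHp; auto].
   rewrite <- rsum_plus. apply rsum_ext. intros j Hj.
   simpl. rewrite bit_high by auto. rewrite bit_add_top by auto.
   rewrite (minS_low nu p p (j + 2 ^ p) j) by (auto; intros; apply bit_add_low; auto).
   rewrite (maxS_low nu p p (j + 2 ^ p) j) by (auto; intros; apply bit_add_low; auto).
   apply pair_id. Qed.

Lemma layer_J : forall nu p v c, (v < p)%nat -> 0 <= c -> 0 <= nu v ->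
  rsum (2 ^ p) (fun j => if Nat.testbit j v then Rmax 0 (minS nu p j c - maxS nu p j) else 0) = Rmin (nu v) c.
Proof. intros nu p v c Hv Hc Hnu. induction p; [lia|].
 destruct (Nat.eq_dec v p).
 - subst. rewrite rsum_pow2. rewrite rsum_zero.
   + rewrite Rplus_0_l. transitivity (rsum (2^p) (fun j => Rmax 0 (minS nu p j (Rmin (nu p) c) - maxS nu p j))); [|apply layer_H; apply Rmin_glb; auto].
 apply rsum_ext. intros j Hj. rewrite bit_add_top by auto. simpl. rewrite bit_add_top by auto.
       rewrite (minS_low nu p p (j + 2 ^ p) j) by (auto; intros; apply bit_add_low; auto).
       rewrite (maxS_low nu p p (j + 2 ^ p) j) by (auto; intros; apply bit_add_low; auto).
       rewrite minS_min. auto.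
   + intros. rewrite bit_high; auto.
 - rewrite rsum_pow2. rewrite <- IHp by lia. rewrite <- rsum_plus. apply rsum_ext. intros j Hj.
   rewrite bit_add_low by (auto; lia). destruct (Nat.testbit j v); [|ring].
   simpl. rewrite bit_high by auto. rewrite bit_add_top by auto.
   rewrite (minS_low nu p p (j + 2 ^ p) j) by (auto; intros; apply bit_add_low; auto).
   rewrite (maxS_low nu p p (j + 2 ^ p) j) by (auto; intros; apply bit_add_low; auto).
   apply pair_id. Qed.

Lemma layer_cake : forall nu nv v, (v < nv)%nat -> 0 <= nu v <= 1 ->
  rsum (2 ^ nv) (fun j => if Nat.testbit j v then Tz nu nv j else 0) = nu v.
Proof. intros. unfold Tz. rewrite layer_J by (auto; lra). unfold Rmin. destruct (Rle_dec (nu v) 1); lra. Qed.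

Lemma minS_le : forall nu p j c a, (a < p)%nat -> Nat.testbit j a = true -> minS nu p j c <= nu a.
Proof. induction p; intros; [lia|]. simpl. destruct (Nat.eq_dec a p).
 - subst. rewrite H0. apply Rmin_l.
 - destruct (Nat.testbit j p). eapply Rle_trans. apply Rmin_r. apply IHp; auto; lia. apply IHp; auto; lia. Qed.

Lemma maxS_ge : forall nu p j b, (b < p)%nat -> Nat.testbit j b = false -> nu b <= maxS nu p j.
Proof. induction p; intros; [lia|]. simpl. destruct (Nat.eq_dec b p).
 - subst. rewrite H0. apply Rmax_l.
 - destruct (Nat.testbit j p). apply IHp; auto; lia. apply Rle_trans with (maxS nu p j). apply IHp; auto; lia. apply Rmax_r. Qed.

Lemma maxS_nonneg : forall nu p j, 0 <= maxS nu p j.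
Proof. induction p; intros; simpl. lra. destruct (Nat.testbit j p); auto. eapply Rle_trans. apply IHp. apply Rmax_r. Qed.

Lemma minS_le_c : forall nu p j c, minS nu p j c <= c.
Proof. induction p; intros; simpl. lra. destruct (Nat.testbit j p); auto. eapply Rle_trans. apply Rmin_r. auto. Qed.

Lemma Tz_range : forall nu nv j, 0 <= Tz nu nv j <= 1.
Proof. intros. unfold Tz. split. apply Rmax_l. pose proof (minS_le_c nu nv j 1). pose proof (maxS_nonneg nu nv j).
 unfold Rmax. destruct (Rle_dec 0 _); lra. Qed.

Lemma Tz_pos_sep : forall nu nv j a b, 0 < Tz nu nv j -> (a < nv)%nat -> (b < nv)%nat ->
  Nat.testbit j a = true -> Nat.testbit j b = false -> nu b < nu a.
Proof. intros. unfold Tz in H. pose proof (minS_le nu nv j 1 a H0 H2). pose proof (maxS_ge nu nv j b H1 H3).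
 unfold Rmax in H. destruct (Rle_dec 0 _); lra. Qed.

Lemma Tz_pos_bit : forall nu nv j a, 0 < Tz nu nv j -> (a < nv)%nat -> Nat.testbit j a = true -> 0 < nu a.
Proof. intros. unfold Tz in H. pose proof (minS_le nu nv j 1 a H0 H1). pose proof (maxS_nonneg nu nv j).
 unfold Rmax in H. destruct (Rle_dec 0 _); lra. Qed.

Lemma Rmin_lip : forall a b a' b', Rabs (Rmin a b - Rmin a' b') <= Rabs (a - a') + Rabs (b - b').
Proof. intros. unfold Rmin. destruct (Rle_dec a b) as [h1|h1], (Rle_dec a' b') as [h2|h2];
 try apply Rnot_le_lt in h1; try apply Rnot_le_lt in h2;
 repeat match goal with |- context [Rabs ?x] => destruct (Rcase_abs x); [rewrite (Rabs_left x) by auto | rewrite (Rabs_right x) by auto] end; lra. Qed.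

Lemma Rmax_lip : forall a b a' b', Rabs (Rmax a b - Rmax a' b') <= Rabs (a - a') + Rabs (b - b').
Proof. intros. unfold Rmax. destruct (Rle_dec a b) as [h1|h1], (Rle_dec a' b') as [h2|h2];
 try apply Rnot_le_lt in h1; try apply Rnot_le_lt in h2;
 repeat match goal with |- context [Rabs ?x] => destruct (Rcase_abs x); [rewrite (Rabs_left x) by auto | rewrite (Rabs_right x) by auto] end; lra. Qed.

Lemma minS_lip : forall nu nu' p j c, Rabs (minS nu p j c - minS nu' p j c) <= rsum p (fun i => Rabs (nu i - nu' i)).
Proof. induction p; intros; simpl. replace (c - c) with 0 by ring. rewrite Rabs_R0; lra.
 destruct (Nat.testbit j p). eapply Rle_trans. apply Rmin_lip. specialize (IHp j c). lra.
 specialize (IHp j c). pose proof (Rabs_pos (nu p - nu' p)). lra. Qed.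

Lemma maxS_lip : forall nu nu' p j, Rabs (maxS nu p j - maxS nu' p j) <= rsum p (fun i => Rabs (nu i - nu' i)).
Proof. induction p; intros; simpl. replace (0 - 0) with 0 by ring. rewrite Rabs_R0; lra.
 destruct (Nat.testbit j p). specialize (IHp j). pose proof (Rabs_pos (nu p - nu' p)). lra.
 eapply Rle_trans. apply Rmax_lip. specialize (IHp j). lra. Qed.

Lemma Tz_lip : forall nu nu' nv j, Rabs (Tz nu nv j - Tz nu' nv j) <= 2 * rsum nv (fun i => Rabs (nu i - nu' i)).
Proof. intros. unfold Tz. eapply Rle_trans. apply Rmax_lip. replace (0 - 0) with 0 by ring. rewrite Rabs_R0.
 pose proof (minS_lip nu nu' nv j 1). pose proof (maxS_lip nu nu' nv j).
 replace (minS nu nv j 1 - maxS nu nv j - (minS nu' nv j 1 - maxS nu' nv j)) with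
   ((minS nu nv j 1 - minS nu' nv j 1) - (maxS nu nv j - maxS nu' nv j)) by ring.
 pose proof (Rabs_triang (minS nu nv j 1 - minS nu' nv j 1) (- (maxS nu nv j - maxS nu' nv j))). rewrite Rabs_Ropp in H1.
 unfold Rminus at 1. lra. Qed.

Lemma cnt_sub_eq : forall p j j', (forall i, (i < p)%nat -> Nat.testbit j i = true -> Nat.testbit j' i = true) ->
  cnt p j = cnt p j' -> forall i, (i < p)%nat -> Nat.testbit j i = Nat.testbit j' i.
Proof. induction p; intros; [lia|].
 assert (Hle : forall q, (q <= p)%nat -> (cnt q j <= cnt q j')%nat).
 { induction q; intros; simpl; auto. specialize (IHq ltac:(lia)).
   destruct (Nat.testbit j q) eqn:E. rewrite (H q) by (auto; lia). lia. destruct (Nat.testbit j' q); lia. }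
 simpl in H0. specialize (Hle p (le_n p)).
 destruct (Nat.testbit j p) eqn:E1, (Nat.testbit j' p) eqn:E2.
 - destruct (Nat.eq_dec i p). subst; congruence. apply IHp; [intros; apply H; auto; lia | lia | lia].
 - rewrite (H p) in E2; auto; congruence.
 - lia.
 - destruct (Nat.eq_dec i p). subst; congruence. apply IHp; [intros; apply H; auto; lia | lia | lia]. Qed.

Lemma bits_differ : forall nv j j', (j < 2 ^ nv)%nat -> (j' < 2 ^ nv)%nat -> j <> j' ->
  exists i, (i < nv)%nat /\ Nat.testbit j i <> Nat.testbit j' i.
Proof. intros. apply Classical_Prop.NNPP. intro Hn. apply H1. apply Nat.bits_inj. intro i.
 destruct (lt_dec i nv).
 - apply Classical_Prop.NNPP. intro. apply Hn. eauto.
 - rewrite !(bit_above _ nv) by (auto; lia). auto. Qed.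

Lemma block_unique : forall nu nv j j', (j < 2 ^ nv)%nat -> (j' < 2 ^ nv)%nat -> j <> j' ->
  cnt nv j = cnt nv j' -> 0 < Tz nu nv j -> 0 < Tz nu nv j' -> False.
Proof. intros.
 destruct (bits_differ nv j j' H H0 H1) as [i0 [Hi0 Hd]].
 assert (Ha : exists a, (a < nv)%nat /\ Nat.testbit j a = true /\ Nat.testbit j' a = false).
 { apply Classical_Prop.NNPP. intro Hn. apply Hd. apply (cnt_sub_eq nv j j'); auto.
   intros. destruct (Nat.testbit j' i) eqn:E; auto. exfalso; apply Hn; eauto. }
 assert (Hb : exists b, (b < nv)%nat /\ Nat.testbit j' b = true /\ Nat.testbit j b = false).
 { apply Classical_Prop.NNPP. intro Hn. apply Hd. symmetry. apply (cnt_sub_eq nv j' j); auto.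
   intros. destruct (Nat.testbit j i) eqn:E; auto. exfalso; apply Hn; eauto. }
 destruct Ha as [a [Ha [Ha1 Ha2]]]. destruct Hb as [b [Hb [Hb1 Hb2]]].
 pose proof (Tz_pos_sep nu nv j a b H3 Ha Hb Ha1 Hb2). pose proof (Tz_pos_sep nu nv j' b a H4 Hb Ha Hb1 Ha2). lra. Qed.

Lemma cnt_bound : forall p j (ind : nat -> R), (forall a, (a < p)%nat -> Nat.testbit j a = true -> ind a = 1) ->
  (forall a, 0 <= ind a) -> INR (cnt p j) <= rsum p ind.
Proof. induction p; intros; simpl. lra. rewrite plus_INR.
 specialize (IHp j ind (fun a Ha => H a ltac:(lia)) H0).
 destruct (Nat.testbit j p) eqn:E. rewrite (H p) by auto. simpl; lra. pose proof (H0 p). simpl; lra. Qed.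


Definition Xc (N : nat) (y : pt) : pt := fun j => if Nat.ltb j N then y j / (1 - y N) else 0.
Definition nuC (N : nat) K V (y : pt) (i : nat) : R := (1 - y N) * mu K V (Xc N y) i.

Lemma crep_bounds : forall K V x c, crep K V x c -> forall i, (i < length V)%nat -> 0 <= c i <= 1.
Proof. intros K V x c [s [Hs [Hsup [Hnn [H1 Hx]]]]] i Hi. split; auto.
 rewrite <- H1. apply (rsum_term_le _ c); auto. Qed.

Lemma cone_X : forall N K x t y, is_complex N K -> polyhedron K x -> y N = t -> t < 1 ->
  (forall i, (i < N)%nat -> y i = (1 - t) * x i) -> forall j, Xc N y j = x j.
Proof. intros. unfold Xc. destruct (Nat.ltb j N) eqn:E.
 - apply Nat.ltb_lt in E. rewrite H3 by auto. rewrite H1. field. lra.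
 - apply Nat.ltb_ge in E. symmetry. apply (poly_inRN N K x); auto. Qed.

Lemma nuC_props : forall N n K V y, setup N K V -> complex_dim K n -> cone N (polyhedron K) y ->
  (forall i, (i < length V)%nat -> 0 <= nuC N K V y i <= 1) /\
  rsum (length V) (nuC N K V y) = 1 - y N /\
  (forall l, (l < N)%nat -> y l = rsum (length V) (fun i => nuC N K V y i * nth i V zero_pt l)) /\
  exists s, In s K /\ (length s <= S n)%nat /\ forall i, (i < length V)%nat -> nuC N K V y i <> 0 -> In (nth i V zero_pt) s.
Proof. intros N n K V y Hset Hdim [x [t [Hx [Ht [HyN [Hlow Hhigh]]]]]].
 destruct (Req_dec t 1) as [E|E].
 - assert (Hz : forall i, nuC N K V y i = 0) by (intros; unfold nuC; rewrite HyN, E; ring).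
   split; [|split; [|split]].
   + intros. rewrite Hz; lra.
   + rewrite rsum_zero by auto. rewrite HyN, E; ring.
   + intros. rewrite Hlow, E by auto. rewrite rsum_zero. ring. intros; rewrite Hz; ring.
   + destruct Hdim as [[s [Hs Hl]] _]. exists s. split; auto. split. lia. intros. exfalso; auto.
 - assert (Ht1 : t < 1) by lra.
   assert (HX : Xc N y = x) by (apply functional_extensionality; apply (cone_X N K x t y); auto; apply Hset).
   pose proof (poly_crep N K V x Hset Hx) as Hc.
   pose proof (crep_bounds _ _ _ _ Hc) as Hb.
   destruct Hc as [s [Hs [Hsup [Hnn [H1 Hxr]]]]].
   unfold nuC. rewrite HX. split; [|split; [|split]].
   + intros. specialize (Hb i H). rewrite HyN. split; [apply Rmult_le_pos; lra|].
     assert ((1 - t) * mu K V x i <= 1 * 1) by (apply Rmult_le_compat; lra). lra.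
   + rewrite rsum_scal, H1. rewrite HyN; ring.
   + intros. rewrite Hlow by auto. rewrite Hxr. rewrite HyN. rewrite <- rsum_scal. apply rsum_ext; intros; ring.
   + exists s. split; auto. split. apply Hdim; auto. intros. apply Hsup; auto. intro E0. apply H0. rewrite E0; ring. Qed.

Lemma div_diff : forall a b u u', 0 < u -> u / 2 <= u' ->
  Rabs (a / u - b / u') <= (2 / u) * Rabs (a - b) + (2 / (u * u)) * Rabs a * Rabs (u - u').
Proof. intros.
 assert (Hu' : 0 < u') by lra.
 replace (a / u - b / u') with ((a - b) * / u' + a * (u' - u) * / (u * u')) by (field; lra).
 eapply Rle_trans. apply Rabs_triang. rewrite !Rabs_mult.
 rewrite (Rabs_right (/ u')) by (apply Rle_ge; left; apply Rinv_0_lt_compat; auto).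
 rewrite (Rabs_right (/ (u * u'))) by (apply Rle_ge; left; apply Rinv_0_lt_compat; nra).
 rewrite <- Rabs_Ropp with (x := u' - u). replace (- (u' - u)) with (u - u') by ring.
 assert (/ u' <= 2 / u).
 { apply (Rmult_le_reg_l u'); auto. rewrite Rinv_r by lra. unfold Rdiv.
   apply (Rmult_le_reg_l u); auto. rewrite Rmult_1_r. 
   replace (u * (u' * (2 * / u))) with (2 * u') by (field; lra). lra. }
 assert (/ (u * u') <= 2 / (u * u)).
 { apply (Rmult_le_reg_l (u * u')); [nra|]. rewrite Rinv_r by nra. unfold Rdiv.
   replace (u * u' * (2 * / (u * u))) with (2 * u' / u) by (field; lra).
   apply (Rmult_le_reg_l u); auto. replace (u * (2 * u' / u)) with (2 * u') by (field; lra). lra. }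
 pose proof (Rabs_pos (a - b)). pose proof (Rabs_pos a). pose proof (Rabs_pos (u - u')).
 assert (Rabs (a - b) * / u' <= 2 / u * Rabs (a - b)) by nra.
 assert (Rabs a * Rabs (u - u') * / (u * u') <= 2 / (u * u) * Rabs a * Rabs (u - u')).
 { pose proof (Rmult_le_pos _ _ H4 H5). nra. }
 lra. Qed.

Lemma rsum_N1 : forall N f, rsum (N + 1) f = rsum N f + f N.
Proof. intros. replace (N + 1)%nat with (S N) by lia. reflexivity. Qed.

Lemma dist_N_le : forall N x y, dist N x y <= dist (N + 1) x y.
Proof. intros. unfold dist. rewrite rsum_N1. pose proof (Rabs_pos (x N - y N)). lra. Qed.

Lemma nuC_cont : forall N n K V y, setup N K V -> complex_dim K n -> cone N (polyhedron K) y ->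
  forall i, (i < length V)%nat -> forall eps, 0 < eps -> exists d, 0 < d /\
   forall y', cone N (polyhedron K) y' -> dist (N + 1) y y' < d -> Rabs (nuC N K V y' i - nuC N K V y i) < eps.
Proof. intros N n K V y Hset Hdim Hy i Hi eps Heps.
 pose proof Hy as [x [t [Hx [Ht [HyN [Hlow Hhigh]]]]]].
 assert (HtN : forall y', dist (N + 1) y y' < eps -> Rabs (y N - y' N) < eps).
 { intros. eapply Rle_lt_trans; [|apply H]. apply coord_le_dist. lia. }
 destruct (Req_dec t 1) as [E|E].
 - exists eps. split; auto. intros y' Hy' Hd.
   destruct (nuC_props N n K V y' Hset Hdim Hy') as [Hb [Hs _]].
   assert (Hnn : forall j, (j < length V)%nat -> 0 <= nuC N K V y' j) by (intros; apply Hb; auto).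
   assert (nuC N K V y' i <= 1 - y' N) by (rewrite <- Hs; apply (rsum_term_le _ (nuC N K V y')); auto).
   assert (nuC N K V y i = 0) by (unfold nuC; rewrite HyN, E; ring).
   rewrite H0. specialize (HtN y' Hd). rewrite HyN, E in HtN. specialize (Hnn i Hi).
   rewrite Rminus_0_r, Rabs_right by lra. unfold Rabs in HtN. destruct (Rcase_abs (1 - y' N)); lra.
 - assert (Ht1 : t < 1) by lra. set (u := 1 - t). assert (Hu : 0 < u) by (unfold u; lra).
   assert (HX : forall j, Xc N y j = x j) by (apply (cone_X N K x t y); auto; apply Hset).
   destruct (mu_cont N K V x Hset Hx i Hi (eps / 2)) as [d1 [Hd1 Hmu]]; [lra|].
   set (Y := rsum N (fun l => Rabs (y l))). assert (HY : 0 <= Y) by (apply rsum_nonneg; intros; apply Rabs_pos).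
   set (Kc := 2 / u + 2 / (u * u) * Y).
   assert (HKc : 0 <= Kc).
   { unfold Kc. assert (0 < 2 / u) by (apply Rdiv_lt_0_compat; lra).
     assert (0 < 2 / (u * u)) by (apply Rdiv_lt_0_compat; nra). nra. }
   exists (Rmin (u / 2) (Rmin (eps / 2) (d1 / (Kc + 1)))). split.
   { repeat apply Rmin_pos; try lra. apply Rdiv_lt_0_compat; lra. }
   intros y' Hy' Hd. pose proof Hy' as [x' [t' [Hx' [Ht' [Hy'N [Hlow' Hhigh']]]]]].
   set (d := dist (N + 1) y y') in *.
   assert (Hd2 : d < u / 2) by (eapply Rlt_le_trans; [apply Hd|apply Rmin_l]).
   assert (Hd3 : d < eps / 2) by (eapply Rlt_le_trans; [apply Hd|]; eapply Rle_trans; [apply Rmin_r|apply Rmin_l]).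
   assert (Hd4 : d < d1 / (Kc + 1)) by (eapply Rlt_le_trans; [apply Hd|]; eapply Rle_trans; [apply Rmin_r|apply Rmin_r]).
   assert (Htt : Rabs (t - t') <= d) by (rewrite <- HyN, <- Hy'N; apply coord_le_dist; lia).
   assert (Ht'1 : t' < 1) by (unfold Rabs in Htt; destruct (Rcase_abs (t - t')); unfold u in Hd2; lra).
   assert (HX' : forall j, Xc N y' j = x' j) by (apply (cone_X N K x' t' y'); auto; apply Hset).
   assert (Hdx : dist N x x' <= Kc * d).
   { unfold dist. apply Rle_trans with (rsum N (fun l => (2 / u) * Rabs (y l - y' l) + (2 / (u * u)) * Rabs (y l) * d)).
     - apply rsum_le. intros l Hl. rewrite <- (HX l), <- (HX' l). unfold Xc. 
       replace (Nat.ltb l N) with true by (symmetry; apply Nat.ltb_lt; auto).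
       rewrite Hy'N, HyN. fold u.
       eapply Rle_trans. apply div_diff; auto. unfold u in *; unfold Rabs in Htt; destruct (Rcase_abs (t - t')); lra.
       apply Rplus_le_compat_l. apply Rmult_le_compat_l. apply Rmult_le_pos. left; apply Rdiv_lt_0_compat; nra. apply Rabs_pos.
       replace (u - (1 - t')) with (t' - t) by (unfold u; ring). rewrite <- Rabs_Ropp. replace (- (t' - t)) with (t - t') by ring. auto.
     - rewrite rsum_plus, rsum_scal. rewrite (rsum_ext N (fun l => 2 / (u * u) * Rabs (y l) * d) (fun l => (2 / (u * u) * d) * Rabs (y l))) by (intros; ring).
       rewrite rsum_scal. fold Y. unfold Kc.
       assert (rsum N (fun l => Rabs (y l - y' l)) <= d) by (apply dist_N_le).
       assert (0 < 2 / u) by (apply Rdiv_lt_0_compat; lra). nra. }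
   assert (Hdx1 : dist N x x' < d1).
   { eapply Rle_lt_trans. apply Hdx. assert (0 <= d) by apply dist_nonneg.
     apply Rle_lt_trans with ((Kc + 1) * d). nra.
     apply (Rmult_lt_compat_l (Kc + 1)) in Hd4; [|lra]. replace ((Kc + 1) * (d1 / (Kc + 1))) with d1 in Hd4 by (field; lra). auto. }
   specialize (Hmu x' Hx' Hdx1).
   pose proof (crep_bounds _ _ _ _ (poly_crep N K V x' Hset Hx') i Hi).
   pose proof (crep_bounds _ _ _ _ (poly_crep N K V x Hset Hx) i Hi).
   unfold nuC. rewrite (functional_extensionality _ _ HX), (functional_extensionality _ _ HX'). rewrite HyN, Hy'N.
   replace ((1 - t') * mu K V x' i - (1 - t) * mu K V x i) with ((t - t') * mu K V x' i + (1 - t) * (mu K V x' i - mu K V x i)) by ring.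
   eapply Rle_lt_trans. apply Rabs_triang. rewrite !Rabs_mult.
   rewrite (Rabs_right (mu K V x' i)) by lra. rewrite (Rabs_right (1 - t)) by lra.
   pose proof (Rabs_pos (mu K V x' i - mu K V x i)). pose proof (Rabs_pos (t - t')).
   assert (Rabs (t - t') * mu K V x' i <= d) by nra.
   assert ((1 - t) * Rabs (mu K V x' i - mu K V x i) <= Rabs (mu K V x' i - mu K V x i)) by nra.
   lra. Qed.


Definition apx (N : nat) : pt := fun l => if Nat.eqb l N then 1 else 0.
Definition Wv (N : nat) (V : list pt) (j : nat) (l : nat) : R :=
  rsum (length V) (fun i => if Nat.testbit j i then nth i V zero_pt l - apx N l else 0).
Definition fmap (N n : nat) K V (y : pt) : pt := fun p =>
  if Nat.ltb p (2 ^ length V * (n + 1)) then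
    (if Nat.eqb (cnt (length V) (p mod 2 ^ length V)) (S (p / 2 ^ length V))
     then Tz (nuC N K V y) (length V) (p mod 2 ^ length V) else 0) else 0.
Definition gmap (N n : nat) (V : list pt) (z : pt) : pt := fun l =>
  apx N l + rsum (2 ^ length V * (n + 1)) (fun p => z p * Wv N V (p mod 2 ^ length V) l).

Lemma divmod_km : forall k m j, (j < m)%nat -> ((k * m + j) / m = k /\ (k * m + j) mod m = j)%nat.
Proof. intros. assert (m <> 0)%nat by lia. split.
 - rewrite Nat.div_add_l by auto. rewrite Nat.div_small by auto. lia.
 - rewrite Nat.add_comm. rewrite Nat.Div0.mod_add. apply Nat.mod_small; auto. Qed.

Lemma rsum_one : forall k, rsum k (fun _ => 1) = INR k.
Proof. induction k; simpl; auto. rewrite IHk. destruct k; simpl; lra. Qed.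

Lemma sum_k : forall n c X, rsum (S n) (fun k => if Nat.eqb c (S k) then X else 0) =
  if andb (Nat.leb 1 c) (Nat.leb c (S n)) then X else 0.
Proof. intros. destruct (andb (Nat.leb 1 c) (Nat.leb c (S n))) eqn:E.
 - apply Bool.andb_true_iff in E. destruct E as [E1 E2]. apply Nat.leb_le in E1, E2.
   rewrite (rsum_single _ _ (c - 1)%nat) by (try lia; intros; replace (Nat.eqb c (S i)) with false; auto; symmetry; apply Nat.eqb_neq; lia).
   replace (Nat.eqb c (S (c - 1))) with true; auto. symmetry; apply Nat.eqb_eq; lia.
 - apply rsum_zero. intros. destruct (Nat.eqb c (S i)) eqn:E'; auto. apply Nat.eqb_eq in E'.
   exfalso. apply Bool.andb_false_iff in E. destruct E as [E|E]; apply Nat.leb_gt in E; lia. Qed.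

Lemma cnt_zero_bits : forall p j, cnt p j = 0%nat -> forall i, (i < p)%nat -> Nat.testbit j i = false.
Proof. induction p; intros; [lia|]. simpl in H. destruct (Nat.testbit j p) eqn:E; [simpl in H; lia|].
 destruct (Nat.eq_dec i p). subst; auto. apply IHp; auto; lia. Qed.

Lemma inI_sum : forall N K V s, setup N K V -> In s K ->
  rsum (length V) (fun a => inI (nth a V zero_pt) s) = INR (length s).
Proof. intros N K V s Hset Hs. pose proof Hset as [HK [HV [HsV HVN]]].
 assert (Hnd : NoDup s) by (apply aff_indep_nodup; apply (proj1 HK); auto).
 rewrite (rsum_ext _ _ (fun a => rsum (length s) (fun p => eqI (nth p s zero_pt) (nth a V zero_pt) * 1))).
 - rewrite rsum_swap. rewrite <- rsum_one. apply rsum_ext. intros p Hp.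
   destruct (In_nth V (nth p s zero_pt) zero_pt (HsV s _ Hs (nth_In _ _ Hp))) as [a0 [Ha0 Heq]].
   rewrite <- Heq. rewrite (rsum_ext _ _ (fun i => eqI (nth i V zero_pt) (nth a0 V zero_pt) * 1)) by (intros; rewrite eqI_sym; auto).
   apply (sum_eqI_in V a0 (fun _ => 1)); auto.
 - intros a Ha. unfold inI. destruct (excluded_middle_informative _).
   + destruct (In_nth s _ zero_pt i) as [p0 [Hp0 Heq]]. rewrite <- Heq. symmetry. apply (sum_eqI_in s p0 (fun _ => 1)); auto.
   + symmetry. apply sum_eqI_out; auto. Qed.

Lemma Tz_big_zero : forall N n K V y j, setup N K V -> complex_dim K n -> cone N (polyhedron K) y ->
  (S n < cnt (length V) j)%nat -> Tz (nuC N K V y) (length V) j = 0.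
Proof. intros N n K V y j Hset Hdim Hy Hc.
 destruct (nuC_props N n K V y Hset Hdim Hy) as [Hb [_ [_ [s [Hs [Hls Hsup]]]]]].
 pose proof (Tz_range (nuC N K V y) (length V) j) as [T0 T1].
 destruct (Req_dec (Tz (nuC N K V y) (length V) j) 0) as [E|E]; auto. exfalso.
 assert (Hp : 0 < Tz (nuC N K V y) (length V) j) by lra.
 assert (INR (cnt (length V) j) <= INR (length s)).
 { rewrite <- (inI_sum N K V s Hset Hs). apply cnt_bound.
   - intros. unfold inI. destruct (excluded_middle_informative _); auto. exfalso; apply n0.
     apply Hsup; auto. pose proof (Tz_pos_bit _ _ _ _ Hp H H0). lra.
   - intros. unfold inI. destruct (excluded_middle_informative _); lra. }
 apply INR_le in H. lia. Qed.

Lemma g_f : forall N n K V y, setup N K V -> complex_dim K n -> cone N (polyhedron K) y ->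
  forall l, gmap N n V (fmap N n K V y) l = y l.
Proof. intros N n K V y Hset Hdim Hy l.
 set (nv := length V). set (m := (2 ^ nv)%nat). set (nu := nuC N K V y).
 assert (Hm : (0 < m)%nat) by (unfold m; apply Nat.neq_0_lt_0; apply Nat.pow_nonzero; lia).
 destruct (nuC_props N n K V y Hset Hdim Hy) as [Hb [Hsum [Hrep _]]]. fold nu nv in Hb, Hsum, Hrep.
 assert (S1 : rsum (m * (n + 1)) (fun p => fmap N n K V y p * Wv N V (p mod m) l) =
              rsum m (fun j => Tz nu nv j * Wv N V j l)).
 { rewrite rsum_mul. rewrite (rsum_ext _ _ (fun k => rsum m (fun j => (if Nat.eqb (cnt nv j) (S k) then Tz nu nv j * Wv N V j l else 0)))).
   - rewrite rsum_swap. apply rsum_ext. intros j Hj.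
     replace (n + 1)%nat with (S n) by lia. rewrite sum_k.
     destruct (andb (Nat.leb 1 (cnt nv j)) (Nat.leb (cnt nv j) (S n))) eqn:E; auto.
     apply Bool.andb_false_iff in E. destruct E as [E|E]; apply Nat.leb_gt in E.
     + assert (Wv N V j l = 0). { unfold Wv. apply rsum_zero. intros. rewrite (cnt_zero_bits nv j) by (auto; lia). auto. }
       rewrite H; ring.
     + unfold nu, nv. rewrite (Tz_big_zero N n K V y j) by auto. ring.
   - intros k Hk. apply rsum_ext. intros j Hj. destruct (divmod_km k m j Hj) as [D1 D2].
     unfold fmap. fold nv m. rewrite D1, D2.
     replace (Nat.ltb (k * m + j) (m * (n + 1))) with true by (symmetry; apply Nat.ltb_lt; nia).
     destruct (Nat.eqb (cnt nv j) (S k)); unfold nu; ring. }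
 assert (S2 : rsum m (fun j => Tz nu nv j * Wv N V j l) = rsum nv (fun i => nu i * (nth i V zero_pt l - apx N l))).
 { unfold Wv. fold nv. rewrite (rsum_ext m _ (fun j => rsum nv (fun i => if Nat.testbit j i then Tz nu nv j * (nth i V zero_pt l - apx N l) else 0))).
   - rewrite rsum_swap. apply rsum_ext. intros i Hi.
     rewrite (rsum_ext m _ (fun j => (if Nat.testbit j i then Tz nu nv j else 0) * (nth i V zero_pt l - apx N l))) by (intros; destruct (Nat.testbit _ _); ring).
     rewrite rsum_scalr. f_equal. apply layer_cake; auto.
   - intros. rewrite <- rsum_scal. apply rsum_ext; intros. destruct (Nat.testbit _ _); ring. }
 unfold gmap. fold nv m. rewrite S1, S2.
 rewrite (rsum_ext _ _ (fun i => nu i * nth i V zero_pt l - apx N l * nu i)) by (intros; ring).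
 rewrite rsum_minus, rsum_scal. rewrite Hsum.
 pose proof Hset as [HK [HV [HsV HVN]]].
 destruct (lt_dec l N).
 - unfold apx. replace (Nat.eqb l N) with false by (symmetry; apply Nat.eqb_neq; lia). rewrite (Hrep l) by auto. unfold nu; ring.
 - rewrite (rsum_zero _ (fun i => nuC N K V y i * nth i V zero_pt l)).
   + destruct (Nat.eq_dec l N).
     * subst. unfold apx. rewrite Nat.eqb_refl. ring.
     * unfold apx. replace (Nat.eqb l N) with false by (symmetry; apply Nat.eqb_neq; lia).
       destruct Hy as [x [t [_ [_ [_ [_ Hhigh]]]]]]. rewrite (Hhigh l) by lia. ring.
   + intros. rewrite (HVN (nth i V zero_pt)). ring. apply nth_In; auto. lia. Qed.


Lemma fval : forall N n K V y k i, (k <= n)%nat -> (i < 2 ^ length V)%nat ->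
  fmap N n K V y (k * 2 ^ length V + i)%nat = if Nat.eqb (cnt (length V) i) (S k) then Tz (nuC N K V y) (length V) i else 0.
Proof. intros. unfold fmap. destruct (divmod_km k (2 ^ length V) i H0) as [D1 D2]. rewrite D1, D2.
 replace (Nat.ltb (k * 2 ^ length V + i)%nat (2 ^ length V * (n + 1))) with true; auto.
 symmetry; apply Nat.ltb_lt; nia. Qed.

Lemma f_od : forall N n K V y, setup N K V -> complex_dim K n -> cone N (polyhedron K) y ->
  od_prod (2 ^ length V) n (fmap N n K V y).
Proof. intros N n K V y Hset Hdim Hy. split.
 - intros p Hp. unfold fmap. replace (Nat.ltb p (2 ^ length V * (n + 1))) with false; auto.
   symmetry; apply Nat.ltb_ge; auto.
 - intros k Hk. unfold od_block.
   destruct (classic (exists i0, (i0 < 2 ^ length V)%nat /\ fmap N n K V y (k * 2 ^ length V + i0)%nat <> 0)) as [[i0 [Hi0 Hne]]|Hno].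
   + right. exists i0, (fmap N n K V y (k * 2 ^ length V + i0)%nat). split; auto. split.
     * rewrite fval by auto. destruct (Nat.eqb _ _); [apply Tz_range|lra].
     * intros i Hi. destruct (Nat.eqb i i0) eqn:E. apply Nat.eqb_eq in E; subst; auto.
       apply Nat.eqb_neq in E. apply NNPP. intro Hne2. 
       rewrite fval in Hne, Hne2 by auto.
       destruct (Nat.eqb (cnt (length V) i0) (S k)) eqn:E0; [|lra].
       destruct (Nat.eqb (cnt (length V) i) (S k)) eqn:E1; [|lra].
       apply Nat.eqb_eq in E0, E1.
       pose proof (Tz_range (nuC N K V y) (length V) i). pose proof (Tz_range (nuC N K V y) (length V) i0).
       apply (block_unique (nuC N K V y) (length V) i i0); auto; try lia; lra.
   + left. intros i Hi. apply NNPP. intro. apply Hno. eauto. Qed.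

Lemma g_lip : forall N n V z z', dist (N + 1) (gmap N n V z) (gmap N n V z') <=
  rsum (N + 1) (fun l => rsum (2 ^ length V * (n + 1)) (fun p => Rabs (Wv N V (p mod 2 ^ length V) l))) * dist (2 ^ length V * (n + 1)) z z'.
Proof. intros. unfold dist at 1. rewrite <- rsum_scalr. apply rsum_le. intros l Hl.
 unfold gmap. replace (apx N l + rsum (2 ^ length V * (n + 1)) (fun p => z p * Wv N V (p mod 2 ^ length V) l) -
   (apx N l + rsum (2 ^ length V * (n + 1)) (fun p => z' p * Wv N V (p mod 2 ^ length V) l))) with
   (rsum (2 ^ length V * (n + 1)) (fun p => (z p - z' p) * Wv N V (p mod 2 ^ length V) l)).
 - eapply Rle_trans. apply rsum_abs. rewrite <- rsum_scalr. apply rsum_le. intros p Hp.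
   rewrite Rabs_mult, Rmult_comm. apply Rmult_le_compat_l. apply Rabs_pos. apply coord_le_dist; auto.
 - rewrite (rsum_ext _ _ (fun p => z p * Wv N V (p mod 2 ^ length V) l - z' p * Wv N V (p mod 2 ^ length V) l)) by (intros; ring).
   rewrite rsum_minus. ring. Qed.

Lemma sum_cont : forall k (F : pt -> nat -> R) (Q : pt -> Prop) (ds : pt -> R) y,
  (forall i, (i < k)%nat -> forall eps, 0 < eps -> exists d, 0 < d /\ forall y', Q y' -> ds y' < d -> Rabs (F y' i - F y i) < eps) ->
  forall eps, 0 < eps -> exists d, 0 < d /\ forall y', Q y' -> ds y' < d -> rsum k (fun i => Rabs (F y i - F y' i)) < eps.
Proof. induction k; intros.
 - exists 1. split. lra. intros. simpl. auto.
 - destruct (IHk F Q ds y (fun i Hi => H i ltac:(lia)) (eps / 2)) as [d1 [Hd1 H1]]. lra.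
   destruct (H k ltac:(lia) (eps / 2)) as [d2 [Hd2 H2]]. lra.
   exists (Rmin d1 d2). split. apply Rmin_pos; auto. intros. simpl.
   assert (E1 : ds y' < d1) by (eapply Rlt_le_trans; [apply H4|apply Rmin_l]).
   assert (E2 : ds y' < d2) by (eapply Rlt_le_trans; [apply H4|apply Rmin_r]).
   specialize (H1 y' H3 E1). specialize (H2 y' H3 E2). rewrite <- Rabs_Ropp in H2.
   replace (- (F y' k - F y k)) with (F y k - F y' k) in H2 by ring. lra. Qed.

Lemma f_dist : forall N n K V y y', dist (2 ^ length V * (n + 1)) (fmap N n K V y) (fmap N n K V y') <=
  INR (2 ^ length V * (n + 1)) * (2 * rsum (length V) (fun i => Rabs (nuC N K V y i - nuC N K V y' i))).
Proof. intros. unfold dist. rewrite <- rsum_one, <- rsum_scalr. apply rsum_le. intros p Hp.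
 rewrite Rmult_1_l. unfold fmap. destruct (Nat.ltb _ _). destruct (Nat.eqb _ _).
 - apply Tz_lip.
 - replace (0 - 0) with 0 by ring. rewrite Rabs_R0. pose proof (rsum_nonneg (length V) (fun i => Rabs (nuC N K V y i - nuC N K V y' i)) (fun i _ => Rabs_pos _)). lra.
 - replace (0 - 0) with 0 by ring. rewrite Rabs_R0. pose proof (rsum_nonneg (length V) (fun i => Rabs (nuC N K V y i - nuC N K V y' i)) (fun i _ => Rabs_pos _)). lra. Qed.

Lemma exists_V : forall N K, is_complex N K -> exists V, setup N K V.
Proof. intros N K HK.
 assert (Hnd : forall L : list pt, exists V, NoDup V /\ forall v, In v V <-> In v L).
 { induction L as [|a L IH].
   - exists []. split. constructor. tauto.
   - destruct IH as [V [HV HVL]]. destruct (classic (In a V)).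
     + exists V. split; auto. intros. simpl. split; intros. right; apply HVL; auto. destruct H0; subst; auto. apply HVL; auto.
     + exists (a :: V). split. constructor; auto. intros; simpl. rewrite HVL. tauto. }
 destruct (Hnd (concat K)) as [V [HV HVL]]. exists V. split; auto. split; auto. split.
 - intros. apply HVL. apply in_concat. eauto.
 - intros v Hv. apply HVL in Hv. apply in_concat in Hv. destruct Hv as [s [Hs Hvs]].
   apply (proj1 HK s Hs); auto. Qed.


Theorem mainTheorem15 :
  forall (N n : nat) (K : list (list pt)),
    is_complex N K -> complex_dim K n ->
    exists m : nat,
      embeds (N + 1) (cone N (polyhedron K)) (m * (n + 1)) (od_prod m n).
Proof.
 intros N n K HK Hdim. destruct (exists_V N K HK) as [V Hset].
 exists (2 ^ length V)%nat. exists (fmap N n K V).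
 assert (Hgf : forall y, cone N (polyhedron K) y -> gmap N n V (fmap N n K V y) = y).
 { intros. apply functional_extensionality. apply g_f; auto. }
 split; [|split; [|split]].
 - intros. apply f_od; auto.
 - intros y y' Hy Hy' Heq i. rewrite <- (Hgf y Hy), <- (Hgf y' Hy').
   replace (fmap N n K V y) with (fmap N n K V y') by (apply functional_extensionality; intros; auto). auto.
 - intros y Hy eps Heps.
   set (M := INR (2 ^ length V * (n + 1))). assert (HM : 0 <= M) by apply pos_INR.
   destruct (sum_cont (length V) (nuC N K V) (cone N (polyhedron K)) (fun y' => dist (N + 1) y y') y
      (fun i Hi => nuC_cont N n K V y Hset Hdim Hy i Hi) (eps / (2 * M + 1))) as [d [Hd Hc]].
   { apply Rdiv_lt_0_compat; lra. }
   exists d. split; auto. intros y' Hy' Hdd.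
   eapply Rle_lt_trans. apply f_dist. fold M. specialize (Hc y' Hy' Hdd).
   set (D := rsum (length V) (fun i => Rabs (nuC N K V y i - nuC N K V y' i))) in *.
   assert (0 <= D) by (apply rsum_nonneg; intros; apply Rabs_pos).
   apply Rle_lt_trans with ((2 * M + 1) * D). nra.
   apply (Rmult_lt_compat_l (2 * M + 1)) in Hc; [|lra].
   replace ((2 * M + 1) * (eps / (2 * M + 1))) with eps in Hc by (field; lra). auto.
 - intros y Hy eps Heps.
   set (Cg := rsum (N + 1) (fun l => rsum (2 ^ length V * (n + 1)) (fun p => Rabs (Wv N V (p mod 2 ^ length V) l)))).
   assert (HCg : 0 <= Cg) by (apply rsum_nonneg; intros; apply rsum_nonneg; intros; apply Rabs_pos).
   exists (eps / (Cg + 1)). split. apply Rdiv_lt_0_compat; lra.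
   intros y' Hy' Hdd. rewrite <- (Hgf y Hy), <- (Hgf y' Hy').
   eapply Rle_lt_trans. apply g_lip. fold Cg.
   set (dM := dist (2 ^ length V * (n + 1)) (fmap N n K V y) (fmap N n K V y')) in *.
   assert (0 <= dM) by apply dist_nonneg.
   apply Rle_lt_trans with ((Cg + 1) * dM). nra.
   apply (Rmult_lt_compat_l (Cg + 1)) in Hdd; [|lra].
   replace ((Cg + 1) * (eps / (Cg + 1))) with eps in Hdd by (field; lra). auto.
Qed.
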